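(* In the two-period difference-in-differences setting with anticipation described in the context, suppose $\mu_g$ and $\tau_g$ have different signs. Let $t^*$ satisfy $\Phi(t^* )-\Phi(-t^*/2)=\alpha$, where $\Phi$ is the standard normal CDF, and consider testing $H_0:\mu_g=0$ at level $\alpha$ using the confidence set $CS^\mu_\alpha$ defined in the context. If the t-statistic from the difference-in-differences model without anticipation, $\tilde t=\sqrt{n}\,\hat m_g/\hat\sigma_u$, satisfies $|\tilde t|>t^*$, then for any $\pi$, $0\notin CS^\mu_\alpha$.
   Context: Two periods $t\in\{0,1\}$, i.i.d. units $i=1,\dots,n$, observed treatment $D_i\in\{0,1\}$, unobserved anticipation $A_i\in\{0,1\}$, observed outcomes $Y_{i0},Y_{i1}$, known function $g$. $\mu_g=\mathbb{E}[g(Y_{i1}(1))-g(Y_{i1}(0))\mid D_i=1]$ is the treatment effect on the treated and $\tau_g=\mathbb{E}[g(Y_{i0}(1,1))-g(Y_{i0}(0,1))\mid D_i=1,A_i=1]$ the anticipatory effect, where $Y_{i0}(a,1)$ is the period-0 potential outcome of a treated unit with anticipation status $a$. When $\mu_g$ and $\tau_g$ have different signs, the identified set for $\mu_g$ is the interval with endpoints $m_g/(1+\pi)$ and $m_g$, where $m_g=\mathbb{E}[g(Y_{i1})-g(Y_{i0})\mid D_i=1]-\mathbb{E}[g(Y_{i1})-g(Y_{i0})\mid D_i=0]$ and $\pi\in(0,1)$ bounds $\mathbb{P}[A_i=1\mid D_i=1]$. Let $\hat m_g=\frac1{n_1}\sum_i[g(Y_{i1})-g(Y_{i0})]D_i-\frac1{n_0}\sum_i[g(Y_{i1})-g(Y_{i0})](1-D_i)$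 with $n_1=\sum_iD_i$, $n_0=n-n_1$, let $\hat\pi$ be a consistent estimator of $\pi$, and set the bound estimators $\hat m_g$ and $\hat m_g/(1+\hat\pi)$, with estimated asymptotic standard deviations $\hat\sigma_u$ (for $\hat m_g$) and $\hat\sigma_l=\hat\sigma_u/(1+\hat\pi)$. Let $\hat\sigma=\max\{\hat\sigma_l,\hat\sigma_u\}$, $\hat\mu_{g,l}=\min\{\hat m_g,\hat m_g/(1+\hat\pi)\}$, $\hat\mu_{g,u}=\max\{\hat m_g,\hat m_g/(1+\hat\pi)\}$, let $C_n$ solve $\Phi(C_n+\sqrt n(\hat\mu_{g,u}-\hat\mu_{g,l})/\hat\sigma)-\Phi(-C_n)=\alpha$, and $CS^\mu_\alpha=[\hat\mu_{g,l}-C_n\hat\sigma/\sqrt n,\ \hat\mu_{g,u}+C_n\hat\sigma/\sqrt n]$. *)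

(* Defs.v *)
From HB Require Import structures.
From mathcomp Require Import all_boot all_order all_algebra.
From mathcomp Require Import all_classical all_reals all_analysis.
Set Implicit Arguments. Unset Strict Implicit. Unset Printing Implicit Defensive.
Import Order.TTheory GRing.Theory Num.Theory.
Local Open Scope classical_set_scope.
Local Open Scope ring_scope.

Definition Phi {R : realType} (x : R) : R :=
  fine (normal_prob 0 1 `]-oo, x]).

Section DiD.
Variables (R : realType) (n : nat).
Variables (D : 'I_n -> bool) (Y0 Y1 : 'I_n -> R) (g : R -> R).

Definition n1 : nat := #|[set i | D i]|.
Definition n0 : nat := (n - n1)%N.

Definition mhat : R :=
  (n1%:R)^-1 * (\sum_(i < n | D i) (g (Y1 i) - g (Y0 i)))
  - (n0%:R)^-1 * (\sum_(i < n | ~~ D i) (g (Y1 i) - g (Y0 i))).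

Variables (pihat sigma_u : R).

Definition sigma_l : R := sigma_u / (1 + pihat).
Definition sigma_hat : R := Num.max sigma_l sigma_u.
Definition mu_l_hat : R := Num.min mhat (mhat / (1 + pihat)).
Definition mu_u_hat : R := Num.max mhat (mhat / (1 + pihat)).

Definition Cn_eq (alpha C : R) : Prop :=
  Phi (C + Num.sqrt (n%:R) * (mu_u_hat - mu_l_hat) / sigma_hat) - Phi (- C) = alpha.

Definition CS (C : R) : set R :=
  `[mu_l_hat - C * sigma_hat / Num.sqrt (n%:R),
    mu_u_hat + C * sigma_hat / Num.sqrt (n%:R)].

Definition ttilde : R := Num.sqrt (n%:R) * mhat / sigma_u.

End DiD.

(* Main.v *)
Require Import Defs.
From HB Require Import structures.
From mathcomp Require Import all_boot all_order all_algebra.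
From mathcomp Require Import all_classical all_reals all_analysis.
From mathcomp Require Import measurable_realfun.
From mathcomp Require Import lra ring.
Import Order.TTheory GRing.Theory Num.Theory.
Local Open Scope classical_set_scope.
Local Open Scope ring_scope.
Lemma b_pos (R : realType) (x y : R) : x < y -> (0 < normal_prob (0:R) 1 [set` `]x, y]])%E.
Proof.
move=> xy.
pose c : R := normal_peak 1 * expR (- (x ^+ 2 + y ^+ 2) / 2).
have c0 : 0 < c by rewrite mulr_gt0 ?expR_gt0 // normal_peak_gt0 // oner_neq0.
have le : (\int[lebesgue_measure]_(z in [set` `]x,y]]) (cst c%:E z) <= normal_prob 0 1 [set` `]x, y]])%E.
  rewrite /normal_prob; apply: ge0_le_integral => //.
  - by move=> z _; rewrite lee_fin ltW.
  - apply/measurable_EFinP; apply: measurable_funTS; exact: measurable_normal_pdf.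
  - move=> z /=; rewrite in_itv /= => /andP[h1 h2].
    rewrite lee_fin normal_pdfE ?oner_neq0 // /c ler_pM2l ?normal_peak_gt0 ?oner_neq0 //.
    rewrite /normal_fun ler_expR subr0 expr1n.
    rewrite ler_pM2r // lerN2.
    have [z0|z0] := leP 0 z; nra.
apply: (lt_le_trans _ le).
rewrite integral_cst //= lebesgue_measure_itv /= lte_fin xy -EFinD -EFinM lte_fin.
by rewrite mulr_gt0 // subr_gt0.
Qed.

Lemma Phi_lt (R : realType) (x y : R) : x < y -> Phi x < Phi y.
Proof.
move=> xy.
have split : [set` `]-oo, y]] = [set` `]-oo, x]] `|` [set` `]x, y]] :> set R.
  by rewrite (@itv_bndbnd_setU _ _ _ (BRight x)) //= bnd_simp ltW.
have dis : [set` `]-oo, x]] `&` [set` `]x, y]] = set0 :> set R.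
  apply/seteqP; split => z //= [] /=; rewrite !in_itv /= => h1 /andP[h2 _].
  by move: (le_lt_trans h1 h2); rewrite ltxx.
have E : (normal_prob (0:R) 1 [set` `]-oo, y]] = normal_prob 0 1 [set` `]-oo, x]] + normal_prob 0 1 [set` `]x, y]])%E.
  by rewrite split; apply: measureU => //.
have fa : normal_prob (0:R) 1 [set` `]-oo, x]] \is a fin_num by apply: fin_num_measure.
have fb : normal_prob (0:R) 1 [set` `]x, y]] \is a fin_num by apply: fin_num_measure.
have pos := @b_pos R x y xy.
rewrite /Phi E.
move: fa fb pos; set a := normal_prob _ _ _; set b := normal_prob _ _ _ => fa fb pos.
rewrite (fineD fa fb) ltrDl.
by rewrite -lte_fin fineK.
Qed.

Lemma Phi_le (R : realType) (x y : R) : x <= y -> Phi x <= Phi y.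
Proof. by rewrite le_eqVlt => /orP[/eqP->//|/Phi_lt/ltW]. Qed.

Theorem corollary1 (R : realType) (n : nat)
  (D : 'I_n -> bool) (Y0 Y1 : 'I_n -> R) (g : R -> R)
  (mu_g tau_g : R) (alpha tstar pihat sigma_u C : R) :
  mu_g * tau_g < 0 ->
  (0 < n1 D)%N -> (0 < n0 D)%N ->
  0 < alpha < 1 ->
  0 <= pihat <= 1 ->
  0 < sigma_u ->
  Phi tstar - Phi (- tstar / 2) = alpha ->
  Cn_eq D Y0 Y1 g pihat sigma_u alpha C ->
  tstar < `|ttilde D Y0 Y1 g sigma_u| ->
  ~ (CS D Y0 Y1 g pihat sigma_u C 0).
Proof.
move=> _ _ hn0 /andP[a0 _] /andP[p0 p1] s0 Ht HC HT.
rewrite /CS /Cn_eq /ttilde /mu_l_hat /mu_u_hat /sigma_hat /sigma_l in HC HT *.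
have npos : (0 < n)%N by apply: leq_trans hn0 (leq_subr _ _).
set m := mhat D Y0 Y1 g in HC HT *.
set r := Num.sqrt (n%:R) in HC HT *.
have r0 : 0 < r by rewrite sqrtr_gt0 ltr0n.
set q := 1 + pihat in HC Ht *.
have q0 : 0 < q by rewrite /q; lra.
have q2 : q <= 2 by rewrite /q; lra.
have Emax : Num.max (sigma_u / q) sigma_u = sigma_u.
  apply/max_idPr; rewrite ler_pdivrMr //. have : 1 <= q by rewrite /q; lra. nra.
rewrite Emax in HC *.
set k := sigma_u / r.
have k0 : 0 < k by rewrite divr_gt0.
have t0 : 0 < tstar.
  rewrite ltNge; apply/negP => tle.
  have : Phi tstar <= Phi (- tstar / 2) by apply: Phi_le; lra.
  lra.
set v := `|m| / q / k.
have v0 : 0 <= v by rewrite !divr_ge0 // ltW.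
have HT' : `|r * m / sigma_u| = v * q.
  rewrite /v /k !normrM normfV (ger0_norm (ltW r0)) (ger0_norm (ltW s0)).
  by field; rewrite !gt_eqF.
move=> /=; rewrite in_itv /= => /andP[hlo hhi].
have [hC hdiff] : v <= C /\ Num.max m (m / q) - Num.min m (m / q) = `|m| - `|m| / q.
  have [mpos|mneg] := leP 0 m.
    have mq : m / q <= m.
      rewrite ler_pdivrMr //. have : 1 <= q by rewrite /q; lra. nra.
    rewrite (max_idPl mq) (min_idPr mq) in hlo hhi *.
    rewrite ger0_norm //; split => //.
    rewrite /v ler_pdivrMr // /k.
    have : m / q <= C * sigma_u / r by lra.
    by rewrite ger0_norm // mulrA.
  have mq : m <= m / q.
    rewrite ler_pdivlMr //. have : 1 <= q by rewrite /q; lra. nra.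
  rewrite (max_idPr mq) (min_idPl mq) in hlo hhi *.
  rewrite ltr0_norm //; split; last first.
    rewrite mulNr; lra.
  rewrite /v ler_pdivrMr // /k ltr0_norm // mulrA mulNr; lra.
rewrite hdiff in HC.
have harg : r * (`|m| - `|m| / q) / sigma_u = v * q - v.
  by rewrite /v /k; field; rewrite !gt_eqF.
rewrite harg in HC.
rewrite HT' in HT.
have h1 : Phi tstar < Phi (C + (v * q - v)).
  apply: (lt_le_trans (@Phi_lt R _ _ HT)); apply: Phi_le; lra.
have h2 : Phi (- C) <= Phi (- tstar / 2).
  apply: Phi_le. nra.
lra.
Qed.
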